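(* Let $p$ be a prime, let $P > 1$ be a finite abelian $p$-group, and let $G$ be a finite $p'$-group acting faithfully on $P$ via automorphisms. Let $a$ be an integer with $1 \le a \le \log_p(\exp(P))$ and let $\Gamma$ be the set of elements of order $p^a$ in $P$. Then the number $n(G,\Gamma)$ of orbits of $G$ on $\Gamma$ satisfies $n(G,\Gamma) \ge p^{a-1}$.
   Context: A $p'$-group is a finite group whose order is not divisible by $p$. $\exp(P)$ denotes the exponent of $P$. *)

(* Defs.v *)
From mathcomp Require Import all_boot all_fingroup all_solvable.
Set Implicit Arguments. Unset Strict Implicit. Unset Printing Implicit Defensive.

Definition num_orbits (aT : finGroupType) (D : {set aT}) (rT : finType)
  (to : action D rT) (G : {set aT}) (Gamma : {set rT}) : nat :=
  #|orbit to G @: Gamma|.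

(* Main.v *)
Require Import Defs.
From mathcomp Require Import all_boot all_fingroup all_solvable.
From mathcomp Require Import pgroup.
From mathcomp Require Import zify.

Lemma nt p a m u v : prime p -> ~~ (p %| m) -> u = v %[mod p] -> ~~ (p %| u) -> ~~ (p %| v) ->
  u ^ m = v ^ m %[mod p ^ a] -> u = v %[mod p ^ a].
Proof.
move=> pp pm.
have m0 : 0 < m by case: m pm => //; rewrite dvdn0.
wlog le_vu : u v / v <= u.
  move=> W Huv pu pv Hm; case: (leqP v u) => [|/ltnW] h; first exact: W.
  by apply/esym; apply: W.
move=> Huv pu pv Hm.
apply/eqP; rewrite eqn_mod_dvd //.
move: Hm; move/eqP; rewrite eqn_mod_dvd ?leq_exp2r // subn_exp.
set S := \sum_(i < m) _.
have HS : S = m * v ^ m.-1 %[mod p].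
  rewrite /S -modn_summ.
  rewrite (eq_bigr (fun _ => v ^ m.-1 %% p)); last first.
    move=> i _; rewrite -modnMml -modnXm Huv modnXm modnMml -expnD subnK // -ltnS prednK //.
  by rewrite modn_summ sum_nat_const card_ord.
have cS : coprime (p ^ a) S.
  case: a => [|a']; first by rewrite expn0 coprime1n.
  rewrite coprime_pexpl // prime_coprime //.
  rewrite /dvdn HS -/(dvdn _ _) Euclid_dvdM // Euclid_dvdX //.
  by rewrite negb_or pm /= (negbTE pv).
by rewrite Gauss_dvdl.
Qed.

Lemma act_pow (aT gT : finGroupType) (G : {group aT}) (P : {group gT})
  (to : groupAction G P) (x : gT) (g : aT) (u v : nat) :
  x \in P -> g \in G -> to (x ^+ u)%g g = (x ^+ v)%g ->
  forall j n, to (x ^+ (u ^ j * n))%g (g ^+ j)%g = (x ^+ (v ^ j * n))%g.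
Proof.
move=> Px Gg H j; elim: j => [|j IH] n.
  by rewrite expg0 act1 !expn0 !mul1n.
rewrite expgS actMin ?groupX //.
rewrite expnS -mulnA expgM gactX ?groupX // H -expgM mulnCA IH.
by rewrite expnSr mulnA.
Qed.
Arguments act_pow {aT gT G P to x g u v}.
Arguments nt {p a m u v}.

Theorem theorem2p4 (p : nat) (aT gT : finGroupType)
  (G : {group aT}) (P : {group gT}) (to : groupAction G P) (a : nat) :
  prime p ->
  abelian P -> pgroup p P -> P :!=: 1%g ->
  pgroup (p^') G ->
  [faithful G, on P | to] ->
  1 <= a <= logn p (exponent P) ->
  p ^ a.-1 <= num_orbits to G [set x in P | #[x]%g == p ^ a].
Proof.
move=> pp _ pP _ p'G _ /andP[a1 ae].
have p0 : 0 < p by apply: prime_gt0.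
have [x0 Px0 ex] := exponent_witness (pgroup_nil pP).
set e := logn p (exponent P) in ae.
have eP : exponent P = p ^ e.
  rewrite -p_part part_pnat_id //; exact: pnat_dvd (exponent_dvdn P) pP.
set x := (x0 ^+ (p ^ (e - a)))%g.
have Px : x \in P by rewrite groupX.
have ox : #[x]%g = p ^ a.
  rewrite /x orderXdiv -ex eP; last by rewrite dvdn_exp2l ?leq_subr.
  by rewrite -{1}(subnK ae) expnD mulKn // expn_gt0 p0.
set f := fun k : 'I_(p ^ a.-1) => orbit to G (x ^+ (1 + p * k))%g.
have pu : forall k, ~~ (p %| 1 + p * k).
  move=> k; rewrite dvdn_addl ?dvdn_mulr //; apply/negP; rewrite dvdn1 => /eqP p1.
  by rewrite p1 in pp.
have finj : injective f.
  move=> i j Hij.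
  have : (x ^+ (1 + p * i))%g \in orbit to G (x ^+ (1 + p * j))%g.
    by rewrite -/(f j) -Hij orbit_refl.
  case/orbitP => g Gg Hg.
  have := act_pow Px Gg Hg #[g]%g 1.
  rewrite expg_order act1 => /eqP; rewrite eq_expg_mod_order ox !muln1 => /eqP H.
  have pm : ~~ (p %| #[g]%g).
    rewrite -p'natE //; apply: pnat_dvd (order_dvdG Gg) p'G.
  have m1 : forall k, 1 + p * k = 1 %[mod p] by move=> k; rewrite addnC mulnC modnMDl.
  have := nt pp pm (etrans (m1 j) (esym (m1 i))) (pu j) (pu i) H.
  rewrite !(addnC 1).
  have lt k : k < p ^ a.-1 -> p * k + 1 < p ^ a.
    move=> hk; rewrite -(prednK a1) expnS addn1.
    apply: leq_trans (_ : p * k.+1 <= _); first by have := prime_gt1 pp; rewrite mulnS; lia.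
    by rewrite leq_mul2l hk orbT.
  rewrite ?(addnC 1) !modn_small ?lt // => /eqP; rewrite eqn_add2r eqn_mul2l.
  by rewrite eqn0Ngt p0 /= => /eqP /val_inj.
rewrite /num_orbits.
have -> : p ^ a.-1 = #|f @: setT|.
  by rewrite card_imset // cardsT card_ord.
apply: subset_leq_card; apply/subsetP => O /imsetP[k _ ->].
apply: imset_f; rewrite inE groupX //= orderXgcd ox.
have -> : gcdn (p ^ a) (1 + p * k) = 1.
  by apply/eqP; change (coprime (p ^ a) (1 + p * k)); rewrite coprime_pexpl // prime_coprime.
by rewrite divn1.
Qed.
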